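(* Let $\mathsf{X}=\mathsf{X}^{(1)}+\mathsf{X}^{(2)}$ be a real time series of length $N$, let $L$ be a window length with $1<L<N$ and $K=N-L+1$. Suppose the $L$-rank of $\mathsf{X}$ equals $r$, the $L$-rank of $\mathsf{X}^{(m)}$ equals $r_m$ for $m=1,2$, and $r_1+r_2=r$. Then there exist symmetric positive semidefinite matrices $\mathbf{L}\in\mathbb{R}^{L\times L}$ and $\mathbf{R}\in\mathbb{R}^{K\times K}$, both of rank $r$ and consistent with each of $\mathbf{X}$, $\mathbf{X}^{(1)}$, $\mathbf{X}^{(2)}$, such that $\mathsf{X}^{(1)}$ and $\mathsf{X}^{(2)}$ are strongly $(\mathbf{L},\mathbf{R})$-separable.
   Context: For a series $\mathsf{Y}=(y_1,\dots,y_N)$ and window length $L$ ($1<L<N$, $K=N-L+1$), the $L$-trajectory matrix $\mathbf{Y}=\mathcal{T}(\mathsf{Y})\in\mathbb{R}^{L\times K}$ has $(i,j)$ entry $y_{i+j-1}$; its rank is the $L$-rank of $\mathsf{Y}$. Bold $\mathbf{X},\mathbf{X}^{(1)},\mathbf{X}^{(2)}$ denote the $L$-trajectory matrices of $\mathsf{X},\mathsf{X}^{(1)},\mathsf{X}^{(2)}$. A pair of symmetric positive semidefinite matrices $(\mathbf{L},\mathbf{R})$, $\mathbf{L}\in\mathbb{R}^{L\times L}$, $\mathbf{R}\in\mathbb{R}^{K\times K}$, is consistent with a matrix $\mathbf{Y}\in\mathbb{R}^{L\times K}$ if the column space of $\mathbf{L}$ contains the column space of $\mathbf{Y}$ and the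 column space of $\mathbf{R}$ contains the row space of $\mathbf{Y}$. For $\mathbf{Y}$ of rank $r$ and $(\mathbf{L},\mathbf{R})$ consistent with $\mathbf{Y}$, an $(\mathbf{L},\mathbf{R})$-SVD of $\mathbf{Y}$ is a decomposition $\mathbf{Y}=\sum_{i=1}^r\sigma_iP_iQ_i^{\mathrm{T}}$ with $\sigma_1\ge\dots\ge\sigma_r>0$, $P_i\in\mathbb{R}^L$, $Q_i\in\mathbb{R}^K$, $P_i^{\mathrm T}\mathbf{L}P_j=\delta_{ij}$ and $Q_i^{\mathrm T}\mathbf{R}Q_j=\delta_{ij}$. Two series $\mathsf{X}^{(1)},\mathsf{X}^{(2)}$ of length $N$ are weakly $(\mathbf{L},\mathbf{R})$-separable if $(\mathbf{X}^{(1)})^{\mathrm T}\mathbf{L}\mathbf{X}^{(2)}=\mathbf{0}_{K,K}$ and $\mathbf{X}^{(1)}\mathbf{R}(\mathbf{X}^{(2)})^{\mathrm T}=\mathbf{0}_{L,L}$; they are strongly $(\mathbf{L},\mathbf{R})$-separable if they are weakly $(\mathbf{L},\mathbf{R})$-separable and, writing $\mathbf{X}^{(m)}=\sum_{i=1}^{r_m}\sigma_{m,i}P_{m,i}Q_{m,i}^{\mathrm T}$ for $(\mathbf{L},\mathbf{R})$-SVDs, $\sigma_{1,i}\ne\sigma_{2,j}$ for all $i,j$. *)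

(* Defs.v *)
From HB Require Import structures.
From mathcomp Require Import all_boot all_order all_algebra.
Set Implicit Arguments. Unset Strict Implicit. Unset Printing Implicit Defensive.
Import Order.TTheory GRing.Theory Num.Theory.
Local Open Scope ring_scope.

(* L-trajectory matrix (0-indexed): entry (i,j) is y_(i+j), i < L, j < K = N-L+1.
   When L <= N, i + j < N always holds, so the default 0 is never used. *)
Definition traj (R : nzRingType) (N L : nat) (y : 'rV[R]_N) : 'M[R]_(L, N - L + 1) :=
  \matrix_(i < L, j < N - L + 1)
     (match (insub (i + j)%N : option 'I_N) with
      | Some k => y 0 k
      | None => 0
      end).

Definition psd (R : numDomainType) (n : nat) (A : 'M[R]_n) : Prop :=
  A^T = A /\ forall v : 'cV[R]_n, 0 <= (v^T *m A *m v) 0 0.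

(* (L,R) consistent with Y: col space of Lm contains col space of Y,
   col space of Rm contains row space of Y. *)
Definition consistent (R : fieldType) (p q : nat)
  (Lm : 'M[R]_p) (Rm : 'M[R]_q) (Y : 'M[R]_(p, q)) : Prop :=
  (Y^T <= Lm^T)%MS /\ (Y <= Rm^T)%MS.

Definition is_LRSVD (R : numFieldType) (p q : nat)
  (Lm : 'M[R]_p) (Rm : 'M[R]_q) (Y : 'M[R]_(p, q))
  (s : 'I_(\rank Y) -> R) (P : 'I_(\rank Y) -> 'cV[R]_p)
  (Q : 'I_(\rank Y) -> 'cV[R]_q) : Prop :=
  [/\ Y = \sum_(i < \rank Y) s i *: (P i *m (Q i)^T),
      (forall i j : 'I_(\rank Y), (i <= j)%N -> s j <= s i),
      (forall i, 0 < s i),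
      (forall i j, (P i)^T *m Lm *m P j = (i == j)%:R%:M) &
      (forall i j, (Q i)^T *m Rm *m Q j = (i == j)%:R%:M)].

Definition weakly_sep (R : fieldType) (p q : nat)
  (Lm : 'M[R]_p) (Rm : 'M[R]_q) (X1 X2 : 'M[R]_(p, q)) : Prop :=
  X1^T *m Lm *m X2 = 0 /\ X1 *m Rm *m X2^T = 0.

Definition strongly_sep (R : numFieldType) (p q : nat)
  (Lm : 'M[R]_p) (Rm : 'M[R]_q) (X1 X2 : 'M[R]_(p, q)) : Prop :=
  [/\ weakly_sep Lm Rm X1 X2,
      (exists s P Q, @is_LRSVD R p q Lm Rm X1 s P Q),
      (exists s P Q, @is_LRSVD R p q Lm Rm X2 s P Q) &
      (forall s1 P1 Q1 s2 P2 Q2,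
         @is_LRSVD R p q Lm Rm X1 s1 P1 Q1 ->
         @is_LRSVD R p q Lm Rm X2 s2 P2 Q2 ->
         forall i j, s1 i != s2 j)].

(* Main.v *)
Require Import Defs.
From HB Require Import structures.
From mathcomp Require Import all_boot all_order all_algebra.
From mathcomp Require Import zify ring lra.
Set Implicit Arguments. Unset Strict Implicit. Unset Printing Implicit Defensive.
Import Order.TTheory GRing.Theory Num.Theory.
Local Open Scope ring_scope.



Section Aux.
Variable R : rcfType.

Lemma gram_entry p q (M : 'M[R]_(p, q)) i :
  (M *m M^T) i i = \sum_k M i k ^+ 2.
Proof. by rewrite mxE; apply: eq_bigr => k _; rewrite mxE expr2. Qed.

Lemma gram_ge0 p q (M : 'M[R]_(p, q)) i : 0 <= (M *m M^T) i i.
Proof. by rewrite gram_entry sumr_ge0 // => k _; rewrite sqr_ge0. Qed.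

Lemma gram_eq0 p q (M : 'M[R]_(p, q)) : M *m M^T = 0 -> M = 0.
Proof.
move=> H; apply/matrixP => i k; rewrite mxE.
have := congr1 (fun X : 'M[R]_p => X i i) H; rewrite gram_entry mxE => /eqP.
rewrite psumr_eq0 => [/allP /(_ k) |]; last by move=> j _; rewrite sqr_ge0.
by rewrite mem_index_enum => /(_ isT) /implyP /(_ isT); rewrite sqrf_eq0 => /eqP.
Qed.

Lemma gram_rank p q (M : 'M[R]_(p, q)) : \rank (M *m M^T) = \rank M.
Proof.
apply/eqP; rewrite eqn_leq mxrankM_maxl /=.
set K := kermx (M *m M^T).
have KM : K *m M = 0.
  apply: gram_eq0; rewrite trmx_mul mulmxA -(mulmxA K) .
  by rewrite mulmx_ker mul0mx.
have : (K <= kermx M)%MS by apply/sub_kermxP.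
move/mxrankS; rewrite !mxrank_ker => H.
have h1 := rank_leq_row M; have h2 := rank_leq_row (M *m M^T).
by lia.
Qed.

Definition Wc r n (Pt : 'M[R]_(r, n)) (S : 'M[R]_r) : 'M[R]_(r, n) :=
  S^T *m invmx (Pt *m Pt^T) *m Pt.
Definition Fc r n (Pt : 'M[R]_(r, n)) (S : 'M[R]_r) : 'M[R]_n :=
  (Wc Pt S)^T *m Wc Pt S.

Lemma Fc_sym r n (Pt : 'M[R]_(r, n)) S : (Fc Pt S)^T = Fc Pt S.
Proof. by rewrite /Fc trmx_mul trmxK. Qed.

Lemma Fc_psd r n (Pt : 'M[R]_(r, n)) S : psd (Fc Pt S).
Proof.
split; first exact: Fc_sym.
move=> v; rewrite /Fc mulmxA -trmx_mul -mulmxA.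
have := gram_ge0 ((Wc Pt S *m v)^T) 0.
by rewrite trmxK.
Qed.

Section Fix.
Variables (r n : nat) (Pt : 'M[R]_(r, n)) (S : 'M[R]_r).
Hypothesis Pfree : row_free Pt.
Hypothesis Sunit : S \in unitmx.

Lemma G_unit : Pt *m Pt^T \in unitmx.
Proof.
by rewrite -row_free_unit /row_free gram_rank.
Qed.

Lemma Wc_Pt : Wc Pt S *m Pt^T = S^T.
Proof.
by rewrite /Wc -!mulmxA mulVmx ?G_unit // mulmx1.
Qed.

Lemma Pt_Fc_Pt : Pt *m Fc Pt S *m Pt^T = S *m S^T.
Proof.
have := Wc_Pt; rewrite /Fc; move: (Wc Pt S) => W HW.
rewrite !mulmxA -(mulmxA _ W) HW.
have -> : Pt *m W^T = S by rewrite -[Pt in LHS]trmxK -trmx_mul HW trmxK.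
by [].
Qed.

Lemma U_unit : S^T *m invmx (Pt *m Pt^T) \in unitmx.
Proof. by rewrite unitmx_mul unitmx_tr Sunit unitmx_inv G_unit. Qed.

Lemma Pt_sub_Fc : (Pt <= Fc Pt S)%MS.
Proof.
have W1 : (Wc Pt S <= Fc Pt S)%MS.
  have -> : Wc Pt S = invmx (S) *m (Pt *m Fc Pt S).
    have := Wc_Pt; rewrite /Fc; move: (Wc Pt S) => W HW.
    have HS : Pt *m W^T = S by rewrite -[Pt in LHS]trmxK -trmx_mul HW trmxK.
    by rewrite (mulmxA Pt) HS mulmxA mulVmx ?mul1mx.
  by rewrite mulmxA submxMl.
apply: submx_trans W1.
rewrite {1}(_ : Pt = invmx (S^T *m invmx (Pt *m Pt^T)) *m Wc Pt S) ?submxMl //.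
by rewrite /Wc mulmxA mulVmx ?U_unit ?mul1mx.
Qed.

Lemma Fc_rank : \rank (Fc Pt S) = r.
Proof.
rewrite /Fc -{2}(trmxK (Wc Pt S)) gram_rank mxrank_tr /Wc.
by rewrite mxrankMfree // mxrank_unit // U_unit.
Qed.
End Fix.
End Aux.



Section Aux2.
Variable R : rcfType.

Lemma sum_delta k p q (f : 'I_k -> R) (Q : 'I_k -> 'M[R]_(p, q)) i :
  \sum_j (f j * (j == i)%:R) *: Q j = f i *: Q i.
Proof.
rewrite (bigD1 i) //= eqxx mulr1 big1 ?addr0 // => j /negbTE ->.
by rewrite mulr0 scale0r.
Qed.

Lemma svd_sq_gen p q k (Lm : 'M[R]_p) (Rm : 'M[R]_q) (Y : 'M[R]_(p, q)) c
  (s : 'I_k -> R) (P : 'I_k -> 'cV[R]_p) (Q : 'I_k -> 'cV[R]_q) :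
  Y^T *m Lm *m Y *m Rm *m Y^T = c *: Y^T ->
  Y = \sum_(i < k) s i *: (P i *m (Q i)^T) ->
  (forall i, 0 < s i) ->
  (forall i j, (P i)^T *m Lm *m P j = (i == j)%:R%:M) ->
  (forall i j, (Q i)^T *m Rm *m Q j = (i == j)%:R%:M) ->
  forall i, s i ^+ 2 = c.
Proof.
move=> HC HY Hpos HP HQ i.
have h1 : Y^T *m Lm *m P i = s i *: Q i.
  rewrite -(@sum_delta _ _ _ s Q i) HY linear_sum /= !mulmx_suml.
  apply: eq_bigr => l _.
  by rewrite linearZ /= trmx_mul trmxK -!scalemxAl -!mulmxA (mulmxA (P l)^T) HP mul_mx_scalar scalerA.
have h2 : Y *m Rm *m Q i = s i *: P i.
  rewrite -(@sum_delta _ _ _ s P i) HY !mulmx_suml.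
  apply: eq_bigr => l _.
  by rewrite -!scalemxAl -!mulmxA (mulmxA (Q l)^T) HQ mul_mx_scalar scalerA.
have h3 : (s i ^+ 3) *: Q i = (c * s i) *: Q i.
  have := congr1 (fun X => X *m Lm *m P i) HC.
  rewrite /= -scalemxAl -scalemxAl h1 scalerA => <-.
  have e1 : forall W : 'M_q, W *m Y^T *m Lm *m P i = W *m (Y^T *m Lm *m P i).
    by move=> W; rewrite !mulmxA.
  have e2 : Y^T *m Lm *m Y *m Rm *m Q i = Y^T *m Lm *m (Y *m Rm *m Q i).
    by rewrite !mulmxA.
  rewrite e1 h1 -scalemxAr e2 h2 -scalemxAr h1 !scalerA.
  by rewrite exprSr expr2.
have Qnz : Q i != 0.
  apply/eqP => Q0; have := HQ i i; rewrite Q0 trmx0 !mul0mx eqxx.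
  move/matrixP => /(_ 0 0); rewrite !mxE /= => /eqP; by rewrite eq_sym oner_eq0.
move/eqP: h3; rewrite -subr_eq0 -scalerBl scalemx_eq0 (negbTE Qnz) orbF subr_eq0.
rewrite exprSr => /eqP /mulIf; apply; exact: lt0r_neq0.
Qed.
Lemma svd_sq p q (Lm : 'M[R]_p) (Rm : 'M[R]_q) (Y : 'M[R]_(p, q)) c s P Q :
  Y^T *m Lm *m Y *m Rm *m Y^T = c *: Y^T ->
  @is_LRSVD R p q Lm Rm Y s P Q -> forall i, s i ^+ 2 = c.
Proof. by move=> HC [HY _ Hpos HP HQ]; apply: svd_sq_gen HC HY Hpos HP HQ. Qed.
End Aux2.



Section Aux3.
Variable R : rcfType.

Definition E1 (k1 k2 : nat) : 'M[R]_(k1, k1 + k2) := row_mx 1%:M 0.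
Definition E2 (k1 k2 : nat) : 'M[R]_(k2, k1 + k2) := row_mx 0 1%:M.
Definition SL (k1 k2 : nat) : 'M[R]_(k1 + k2) := block_mx 1%:M 0 0 (2%:M).

Lemma E1E1 k1 k2 : E1 k1 k2 *m (E1 k1 k2)^T = 1%:M.
Proof. by rewrite /E1 tr_row_mx mul_row_col trmx1 trmx0 mulmx1 mulmx0 addr0. Qed.
Lemma E2E2 k1 k2 : E2 k1 k2 *m (E2 k1 k2)^T = 1%:M.
Proof. by rewrite /E2 tr_row_mx mul_row_col trmx1 trmx0 mulmx1 mulmx0 add0r. Qed.
Lemma E1E2 k1 k2 : E1 k1 k2 *m (E2 k1 k2)^T = 0.
Proof. by rewrite /E1 /E2 tr_row_mx mul_row_col trmx1 trmx0 mulmx1 mulmx0 addr0. Qed.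
Lemma E2E1 k1 k2 : E2 k1 k2 *m (E1 k1 k2)^T = 0.
Proof. by rewrite /E1 /E2 tr_row_mx mul_row_col trmx1 trmx0 mulmx1 mulmx0 addr0. Qed.
Lemma E1S k1 k2 : E1 k1 k2 *m SL k1 k2 = E1 k1 k2.
Proof. by rewrite /E1 /SL mul_row_block !mulmx0 !mul1mx !mul0mx !addr0. Qed.
Lemma E2S k1 k2 : E2 k1 k2 *m SL k1 k2 = 2 *: E2 k1 k2.
Proof.
by rewrite /E2 /SL mul_row_block !mulmx0 !mul1mx !mul0mx !add0r scale_row_mx scaler0 scale_scalar_mx mulr1.
Qed.
Lemma SL_unit k1 k2 : SL k1 k2 \in unitmx.
Proof.
rewrite /SL unitmxE det_ublock !det_scalar expr1n mul1r unitfE expf_neq0 //.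
by rewrite pnatr_eq0.
Qed.
Lemma E1col p k1 k2 (X : 'M[R]_(k1, p)) Y : E1 k1 k2 *m col_mx X Y = X.
Proof. by rewrite /E1 mul_row_col mul1mx mul0mx addr0. Qed.
Lemma E2col p k1 k2 (X : 'M[R]_(k1, p)) (Y : 'M[R]_(k2, p)) : E2 k1 k2 *m col_mx X Y = Y.
Proof. by rewrite /E2 mul_row_col mul1mx mul0mx add0r. Qed.

Lemma sandwich r n a b (Ea : 'M[R]_(a, r)) (Eb : 'M[R]_(b, r)) (Pt : 'M[R]_(r, n)) F :
  (Ea *m Pt) *m F *m (Eb *m Pt)^T = Ea *m (Pt *m F *m Pt^T) *m Eb^T.
Proof. by rewrite trmx_mul !mulmxA. Qed.

Lemma tr_sum_rows k p q (X : 'M[R]_(k, p)) (Y : 'M[R]_(k, q)) :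
  X^T *m Y = \sum_(i < k) (row i X)^T *m row i Y.
Proof.
apply/matrixP => a b; rewrite !mxE summxE; apply: eq_bigr => i _.
by rewrite !mxE big_ord1 !mxE.
Qed.

Lemma row_entry k p (X : 'M[R]_(k, p)) (M : 'M[R]_p) i j :
  row i X *m M *m (row j X)^T = ((X *m M *m X^T) i j)%:M.
Proof.
apply/matrixP => a b; rewrite !ord1 !mxE; apply: eq_bigr => l _.
rewrite !mxE; congr (_ * _); apply: eq_bigr => m _; by rewrite !mxE.
Qed.
End Aux3.



Section Main.
Variable R : rcfType.
Variables (p q : nat) (A B : 'M[R]_(p, q)).
Hypothesis Hr : \rank (A + B)%R = (\rank A + \rank B)%N.

Let k1 : nat := \rank A.
Let k2 : nat := \rank B.
Let PtL : 'M[R]_(k1 + k2, p) := col_mx (col_base A)^T (col_base B)^T.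
Let PtR : 'M[R]_(k1 + k2, q) := col_mx (row_base A) (row_base B).
Let a1 := E1 R k1 k2 *m PtL.
Let a2 := E2 R k1 k2 *m PtL.
Let b1 := E1 R k1 k2 *m PtR.
Let b2 := E2 R k1 k2 *m PtR.

Lemma Aab : A = a1^T *m b1.
Proof. by rewrite /a1 /b1 !E1col trmxK mulmx_base. Qed.
Lemma Bab : B = a2^T *m b2.
Proof. by rewrite /a2 /b2 !E2col trmxK mulmx_base. Qed.

Lemma ABsum : A + B = PtL^T *m PtR.
Proof.
rewrite /PtL /PtR tr_col_mx !trmxK mul_row_col !mulmx_base //.
Qed.

Lemma PtL_free : row_free PtL.
Proof.
rewrite /row_free; apply/eqP/anti_leq; rewrite rank_leq_row /=.
have := mxrankM_maxl PtL^T PtR; by rewrite -ABsum Hr mxrank_tr.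
Qed.

Lemma PtR_free : row_free PtR.
Proof.
rewrite /row_free; apply/eqP/anti_leq; rewrite rank_leq_row /=.
have := mxrankM_maxr PtL^T PtR; rewrite -ABsum Hr //.
Qed.

Let Lm := Fc PtL (SL R k1 k2).
Let Rm := Fc PtR (1%:M : 'M[R]_(k1 + k2)).

Lemma LPP : PtL *m Lm *m PtL^T = SL R k1 k2 *m (SL R k1 k2)^T.
Proof. exact: (Pt_Fc_Pt (SL R k1 k2) PtL_free). Qed.
Lemma RPP : PtR *m Rm *m PtR^T = 1%:M.
Proof. by rewrite (Pt_Fc_Pt _ PtR_free) trmx1 mulmx1. Qed.

Lemma aLa1 : a1 *m Lm *m a1^T = 1%:M.
Proof.
rewrite /a1 sandwich LPP mulmxA E1S -mulmxA -trmx_mul E1S; exact: E1E1.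
Qed.
Lemma aLa12 : a1 *m Lm *m a2^T = 0.
Proof.
rewrite /a1 /a2 sandwich LPP mulmxA E1S -mulmxA -trmx_mul E2S.
by rewrite linearZ /= -scalemxAr E1E2 scaler0.
Qed.
Lemma aLa2 : a2 *m Lm *m a2^T = (2 * 2) *: 1%:M.
Proof.
rewrite /a2 sandwich LPP mulmxA E2S -mulmxA -trmx_mul E2S.
by rewrite linearZ /= -scalemxAr -scalemxAl E2E2 scalerA.
Qed.
Lemma bRb1 : b1 *m Rm *m b1^T = 1%:M.
Proof. by rewrite /b1 sandwich RPP mulmx1 E1E1. Qed.
Lemma bRb12 : b1 *m Rm *m b2^T = 0.
Proof. by rewrite /b1 /b2 sandwich RPP mulmx1 E1E2. Qed.
Lemma bRb2 : b2 *m Rm *m b2^T = 1%:M.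
Proof. by rewrite /b2 sandwich RPP mulmx1 E2E2. Qed.

Lemma sepL : A^T *m Lm *m B = 0.
Proof.
rewrite Aab Bab (_ : forall k k' (X : 'M[R]_(k, p)) (Y : 'M[R]_(k, q)) X' (Y' : 'M[R]_(k', q)),
   (X^T *m Y)^T *m Lm *m (X'^T *m Y') = Y^T *m (X *m Lm *m X'^T) *m Y').
  by rewrite aLa12 mulmx0 mul0mx.
by move=> *; rewrite trmx_mul trmxK !mulmxA.
Qed.

Lemma sepR : A *m Rm *m B^T = 0.
Proof.
rewrite Aab Bab (_ : forall k k' (X : 'M[R]_(k, p)) (Y : 'M[R]_(k, q)) (X' : 'M[R]_(k', p)) Y',
   (X^T *m Y) *m Rm *m (X'^T *m Y')^T = X^T *m (Y *m Rm *m Y'^T) *m X').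
  by rewrite bRb12 mulmx0 mul0mx.
by move=> *; rewrite trmx_mul trmxK !mulmxA.
Qed.

Lemma cube_gen k (X : 'M[R]_(k, p)) (Y : 'M[R]_(k, q)) :
  (X^T *m Y)^T *m Lm *m (X^T *m Y) *m Rm *m (X^T *m Y)^T =
  Y^T *m (X *m Lm *m X^T) *m (Y *m Rm *m Y^T) *m X.
Proof. by rewrite !trmx_mul !trmxK !mulmxA. Qed.

Lemma cubeA : A^T *m Lm *m A *m Rm *m A^T = 1 *: A^T.
Proof.
by rewrite scale1r Aab cube_gen aLa1 bRb1 !mulmx1 [RHS]trmx_mul trmxK.
Qed.

Lemma cubeB : B^T *m Lm *m B *m Rm *m B^T = (2 * 2) *: B^T.
Proof.
rewrite Bab cube_gen aLa2 bRb2 mulmx1 -scalemxAr mul_mx_scalar scalerA mulr1.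
by rewrite -scalemxAl [in RHS]trmx_mul trmxK.
Qed.

Lemma LmT : Lm^T = Lm. Proof. exact: Fc_sym. Qed.
Lemma RmT : Rm^T = Rm. Proof. exact: Fc_sym. Qed.

Lemma PtL_Lm : (PtL <= Lm)%MS.
Proof. exact: (Pt_sub_Fc PtL_free (SL_unit R k1 k2)). Qed.
Lemma PtR_Rm : (PtR <= Rm)%MS.
Proof. exact: (Pt_sub_Fc PtR_free (unitmx1 _ _)). Qed.

Lemma consA : consistent Lm Rm A.
Proof.
split; rewrite ?LmT ?RmT Aab.
  rewrite trmx_mul trmxK /a1 mulmxA; apply: submx_trans PtL_Lm; exact: submxMl.
rewrite /b1 mulmxA; apply: submx_trans PtR_Rm; exact: submxMl.
Qed.

Lemma consB : consistent Lm Rm B.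
Proof.
split; rewrite ?LmT ?RmT Bab.
  rewrite trmx_mul trmxK /a2 mulmxA; apply: submx_trans PtL_Lm; exact: submxMl.
rewrite /b2 mulmxA; apply: submx_trans PtR_Rm; exact: submxMl.
Qed.

Lemma consAB : consistent Lm Rm (A + B).
Proof.
have [h1 h2] := consA; have [h3 h4] := consB.
by split; rewrite ?linearD /=; apply: addmx_sub.
Qed.

Lemma svdA : exists s P Q, @is_LRSVD R p q Lm Rm A s P Q.
Proof.
exists (fun _ => 1), (fun i => (row i a1)^T), (fun i => (row i b1)^T).
split.
- rewrite {1}Aab tr_sum_rows; apply: eq_bigr => i _; by rewrite scale1r trmxK.
- by move=> i j _ /=.
- by move=> i /=; rewrite ltr01.
- by move=> i j; rewrite trmxK row_entry aLa1 mxE.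
- by move=> i j; rewrite trmxK row_entry bRb1 mxE.
Qed.

Lemma two_neq0 : (2 : R) != 0.
Proof. by rewrite pnatr_eq0. Qed.

Lemma svdB : exists s P Q, @is_LRSVD R p q Lm Rm B s P Q.
Proof.
exists (fun _ => 2), (fun i => 2^-1 *: (row i a2)^T), (fun i => (row i b2)^T).
split.
- rewrite {1}Bab tr_sum_rows; apply: eq_bigr => i _.
  by rewrite trmxK -scalemxAl scalerA mulfV ?two_neq0 // scale1r.
- by move=> i j _ /=.
- by move=> i /=; rewrite ltr0n.
- move=> i j; rewrite linearZ /= linearZ /= trmxK -!scalemxAl scalerA row_entry.
  rewrite aLa2 mxE mxE scale_scalar_mx; congr (_ %:M).
  have := two_neq0; move: (2 : R) (((i == j)%:R : R)) => t u tn0.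
  by field.
- by move=> i j; rewrite trmxK row_entry bRb2 mxE.
Qed.

Lemma strong : strongly_sep Lm Rm A B.
Proof.
split; [by split; [exact: sepL | exact: sepR] | exact: svdA | exact: svdB |].
move=> s1 P1 Q1 s2 P2 Q2 H1 H2 i j.
have h1 := svd_sq cubeA H1 i; have h2 := svd_sq cubeB H2 j.
apply/eqP => e; rewrite e in h1.
move: h1; rewrite h2 => h.

lra.
Qed.

Lemma main_sec : exists (Lm : 'M[R]_p) (Rm : 'M[R]_q),
    [/\ psd Lm, psd Rm, \rank Lm = (\rank A + \rank B)%N & \rank Rm = (\rank A + \rank B)%N] /\
    [/\ consistent Lm Rm (A + B), consistent Lm Rm A, consistent Lm Rm B &
        strongly_sep Lm Rm A B].
Proof.
exists Lm, Rm; split; last by split; [exact: consAB | exact: consA | exact: consB | exact: strong].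
split; [exact: Fc_psd | exact: Fc_psd | |].
- exact: (Fc_rank PtL_free (SL_unit R k1 k2)).
- exact: (Fc_rank PtR_free (unitmx1 _ _)).
Qed.
End Main.



Lemma traj_add (R : rcfType) N L (X1 X2 : 'rV[R]_N) :
  traj L (X1 + X2) = traj L X1 + traj L X2.
Proof.
apply/matrixP => i j; rewrite !mxE; case: (insub _) => [k|]; by rewrite ?mxE ?addr0.
Qed.

Theorem theorem1 (R : rcfType) (N L : nat) (X1 X2 : 'rV[R]_N)
  (r r1 r2 : nat) :
  (1 < L)%N -> (L < N)%N ->
  \rank (traj L (X1 + X2)) = r ->
  \rank (traj L X1) = r1 ->
  \rank (traj L X2) = r2 ->
  (r1 + r2)%N = r ->
  exists (Lm : 'M[R]_L) (Rm : 'M[R]_(N - L + 1)),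
    [/\ psd Lm, psd Rm, \rank Lm = r & \rank Rm = r] /\
    [/\ consistent Lm Rm (traj L (X1 + X2)),
        consistent Lm Rm (traj L X1),
        consistent Lm Rm (traj L X2) &
        strongly_sep Lm Rm (traj L X1) (traj L X2)].
Proof.
move=> _ _ h h1 h2 hs; subst r1 r2; rewrite -hs in h *.
rewrite traj_add in h *.
exact: main_sec h.
Qed.
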